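(* Let $(E,X,Y)$, with $X=(X_1,\dots,X_d)$, be generated by a structural causal model whose graph $\mathcal{G}$ is a DAG, whose distribution is faithful (and Markov) with respect to $\mathcal{G}$, and in which $E$ is exogenous (i.e. $E$ has no parents). Assume that $E$ is not a parent of $Y$ in $\mathcal{G}$. Then (i) $S_{\mathrm{IAS}}\in\mathcal{I}$, and (ii) $S_{\mathrm{ICP}}\subseteq S_{\mathrm{IAS}}$, with equality if and only if $S_{\mathrm{ICP}}\in\mathcal{I}$.
   Context: For $S\subseteq[d]=\{1,\dots,d\}$, write $X_S=(X_j)_{j\in S}$. A set $S\subseteq[d]$ is called invariant if $Y\perp\!\!\!\perp E\mid X_S$; $\mathcal{I}$ denotes the collection of all invariant sets. A set $S$ is minimally invariant if $S\in\mathcal{I}$ and no proper subset $S'\subsetneq S$ lies in $\mathcal{I}$. Define $S_{\mathrm{ICP}}=\bigcap_{S\in\mathcal{I}}S$ (with $S_{\mathrm{ICP}}=\emptyset$ if $\mathcal{I}=\emptyset$) and $S_{\mathrm{IAS}}=\bigcup_{S\text{ minimally invariant}}S$ (with the union over the empty collection being $\emptyset$). *)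

(* Defs.v *)
From mathcomp Require Import all_boot.
Set Implicit Arguments. Unset Strict Implicit. Unset Printing Implicit Defensive.

Definition node (d : nat) : finType := ('I_d + bool)%type.
Definition nE {d : nat} : node d := inr false.
Definition nY {d : nat} : node d := inr true.
Definition nX {d : nat} (j : 'I_d) : node d := inl j.

Section Graph.
Variable d : nat.
(* edge u v : u -> v, i.e. u is a parent of v in G *)
Variable edge : rel (node d).

Definition is_dag : Prop := forall u v, edge u v -> ~~ connect edge v u.

Definition adj (u v : node d) : bool := edge u v || edge v u.

Definition is_path (p : seq (node d)) : Prop :=
  [/\ 1 < size p, uniq p &
      forall i, i.+1 < size p -> adj (nth nE p i) (nth nE p i.+1)].

Definition collider (p : seq (node d)) (i : nat) : bool :=
  edge (nth nE p i.-1) (nth nE p i) && edge (nth nE p i.+1) (nth nE p i).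

Definition d_connecting (Z : {set node d}) (p : seq (node d)) : Prop :=
  forall i, 0 < i -> i.+1 < size p ->
    (collider p i -> exists2 z, z \in Z & connect edge (nth nE p i) z) /\
    (~~ collider p i -> nth nE p i \notin Z).

Definition dsep (A B Z : {set node d}) : Prop :=
  forall p, is_path p -> head nE p \in A -> last nE p \in B ->
    ~ d_connecting Z p.

Definition pairwise_disjoint (A B C : {set node d}) : Prop :=
  [/\ [disjoint A & B], [disjoint A & C] & [disjoint B & C]].

(* CI A B C : X_A is independent of X_B given X_C under the distribution *)
Variable CI : {set node d} -> {set node d} -> {set node d} -> bool.

Definition markov : Prop :=
  forall A B C, pairwise_disjoint A B C -> dsep A B C -> CI A B C.
Definition faithful : Prop :=
  forall A B C, pairwise_disjoint A B C -> CI A B C -> dsep A B C.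

Definition exogenous_E : Prop := forall v, ~~ edge v nE.

Definition is_invariant (S : {set 'I_d}) : bool :=
  CI [set nY] [set nE] [set nX j | j in S].

Definition min_invariant (S : {set 'I_d}) : bool :=
  is_invariant S && [forall S' : {set 'I_d}, (S' \proper S) ==> ~~ is_invariant S'].

Definition S_ICP : {set 'I_d} :=
  if [exists S, is_invariant S] then \bigcap_(S | is_invariant S) S else set0.

Definition S_IAS : {set 'I_d} := \bigcup_(S | min_invariant S) S.

End Graph.

(* Main.v *)
Require Import Defs.
From mathcomp Require Import all_boot zify.
Set Implicit Arguments. Unset Strict Implicit. Unset Printing Implicit Defensive.

Lemma dag2 d (edge : rel (node d)) u v :
  is_dag edge -> edge u v -> edge v u -> False.
Proof. by move=> hd huv hvu; move: (hd _ _ huv); rewrite connect1. Qed.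

Lemma fwd d (edge : rel (node d)) (Z : {set node d}) (p : seq (node d)) :
  exogenous_E edge ->
  (forall i, i.+1 < size p -> adj edge (nth nE p i) (nth nE p i.+1)) ->
  d_connecting edge Z p -> last nE p = nE ->
  forall i, i.+1 < size p -> edge (nth nE p i) (nth nE p i.+1) ->
  exists2 z, z \in Z & connect edge (nth nE p i) z.
Proof.
move=> hex hadj hdc hl.
suff: forall k i, size p - i <= k -> i.+1 < size p ->
   edge (nth nE p i) (nth nE p i.+1) ->
   exists2 z, z \in Z & connect edge (nth nE p i) z.
  by move=> H i; apply: (H (size p)); lia.
elim=> [|k IH] i hk hi he; first lia.
have [hi2|hi2] := ltnP i.+2 (size p); last first.
  have ei : i.+1 = (size p).-1 by lia.
  by move: he; rewrite ei nth_last hl (negbTE (hex _)).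
have [hc hnc] := hdc i.+1 erefl hi2.
case hcol: (collider edge p i.+1).
  have [z hz hcz] := hc hcol; exists z => //.
  exact: connect_trans (connect1 he) hcz.
have he2 : edge (nth nE p i.+1) (nth nE p i.+2).
  move: (hadj i.+1 hi2) hcol; rewrite /adj /collider /= he /=.
  by case: (edge (nth nE p i.+2) (nth nE p i.+1)); rewrite ?orbT ?orbF.
have [z hz hcz] := IH i.+1 ltac:(lia) hi2 he2.
exists z => //; exact: connect_trans (connect1 he) hcz.
Qed.

Lemma bwd d (edge : rel (node d)) (Z : {set node d}) (p : seq (node d)) :
  (forall i, i.+1 < size p -> adj edge (nth nE p i) (nth nE p i.+1)) ->
  d_connecting edge Z p -> nth nE p 0 = nY ->
  forall i, 0 < i -> i < size p -> edge (nth nE p i) (nth nE p i.-1) ->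
  connect edge (nth nE p i) nY \/ exists2 z, z \in Z & connect edge (nth nE p i) z.
Proof.
move=> hadj hdc hh.
elim=> [|i IH] // _ hi /= he.
case: i IH hi he => [|i] IH hi he.
  by left; rewrite -hh; apply: connect1.
have [hc hnc] := hdc i.+1 erefl hi.
case hcol: (collider edge p i.+1).
  have [z hz hcz] := hc hcol; right; exists z => //.
  exact: connect_trans (connect1 he) hcz.
have he2 : edge (nth nE p i.+1) (nth nE p i).
  move: (hadj i ltac:(lia)) hcol; rewrite /adj /collider /= he /= andbT.
  by case: (edge (nth nE p i) (nth nE p i.+1)); rewrite ?orbT ?orbF.
have [h|[z hz hcz]] := IH erefl ltac:(lia) he2.
  by left; exact: connect_trans (connect1 he) h.
by right; exists z => //; exact: connect_trans (connect1 he) hcz.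
Qed.

Lemma interior_anc d (edge : rel (node d)) (Z : {set node d}) (p : seq (node d)) :
  exogenous_E edge ->
  (forall i, i.+1 < size p -> adj edge (nth nE p i) (nth nE p i.+1)) ->
  d_connecting edge Z p -> nth nE p 0 = nY -> last nE p = nE ->
  (forall z, z \in Z -> connect edge z nY) ->
  forall i, 0 < i -> i.+1 < size p -> connect edge (nth nE p i) nY.
Proof.
move=> hex hadj hdc hh hl hZ i hi0 hi.
have [hc hnc] := hdc i hi0 hi.
case hcol: (collider edge p i).
  by have [z hz hcz] := hc hcol; exact: connect_trans hcz (hZ _ hz).
move: hcol; rewrite /collider.
case h1: (edge (nth nE p i.-1) (nth nE p i)) => /= h2.
  have he : edge (nth nE p i) (nth nE p i.+1).
    by move: (hadj i hi); rewrite /adj h2 orbF.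
  by have [z hz hcz] := fwd hex hadj hdc hl hi he; exact: connect_trans hcz (hZ _ hz).
have he : edge (nth nE p i) (nth nE p i.-1).
  by move: (hadj i.-1 ltac:(lia)); rewrite prednK // /adj h1.
have [//|[z hz hcz]] := bwd hadj hdc hh hi0 (ltnW hi) he.
exact: connect_trans hcz (hZ _ hz).
Qed.

Definition anc d (edge : rel (node d)) : {set 'I_d} :=
  [set j | connect edge (nX j) nY].

Lemma restrict_anc d (edge : rel (node d)) (S : {set 'I_d}) :
  exogenous_E edge ->
  dsep edge [set nY] [set nE] [set nX j | j in S] ->
  dsep edge [set nY] [set nE] [set nX j | j in S :&: anc edge].
Proof.
move=> hex hS p hp hh hl hdc; apply: (hS p hp hh hl).
have [hs hu hadj] := hp.
have hh' : nth nE p 0 = nY by rewrite nth0; move: hh; rewrite inE => /eqP.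
have hl' : last nE p = nE by move: hl; rewrite inE => /eqP.
have hZ : forall z, z \in [set nX j | j in S :&: anc edge] -> connect edge z nY.
  by move=> z /imsetP [j]; rewrite inE => /andP [_]; rewrite inE => hj ->.
move=> i hi0 hi; have [hc hnc] := hdc i hi0 hi; split.
  move=> /hc [z hz hcz]; exists z => //.
  by move: hz => /imsetP [j]; rewrite inE => /andP [hj _] ->; apply: imset_f.
move=> /hnc hn; apply/negP => /imsetP [j hj hv].
have ha := interior_anc hex hadj hdc hh' hl' hZ hi0 hi.
move/negP: hn; apply; rewrite hv; apply: imset_f.
by rewrite inE hj inE -hv ha.
Qed.

Lemma pa_inv d (edge : rel (node d)) :
  is_dag edge -> exogenous_E edge -> ~~ edge nE nY ->
  dsep edge [set nY] [set nE] [set nX j | j in [set j | edge (nX j) nY]].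
Proof.
move=> hdag hex hEY p [hs hu hadj] hh hl hdc.
have hh' : nth nE p 0 = nY by rewrite nth0; move: hh; rewrite inE => /eqP.
have hl' : last nE p = nE by move: hl; rewrite inE => /eqP.
move: (hadj 0 hs); rewrite /adj hh'; case/orP => he.
  have he' : edge (nth nE p 0) (nth nE p 1) by rewrite hh'.
  have [z /imsetP [j] hj -> hcz] := fwd hex hadj hdc hl' hs he'.
  move: hj; rewrite inE => hj.
  by move: (hdag _ _ hj); rewrite hh' in hcz; rewrite hcz.
have [hs2|hs2] := ltnP 2 (size p); last first.
  have e1 : 1 = (size p).-1 by lia.
  by move: he; rewrite e1 nth_last hl' (negbTE hEY).
have [hc hnc] := hdc 1 erefl hs2.
have hcol : ~~ collider edge p 1.
  rewrite /collider /= hh'; apply/negP => /andP [h1 _].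
  exact: dag2 hdag h1 he.
move: (hnc hcol); case E1: (nth nE p 1) => [j|[|]].
- rewrite E1 in he; move/negP; apply; apply/imsetP; exists j => //; by rewrite inE.
- move: (nth_uniq nE (ltnW hs) hs hu); rewrite hh' E1 => /=.
  by rewrite /nY eqxx.
- by move: he; rewrite E1 (negbTE hEY).
Qed.

Lemma dirpath (T : finType) (e : rel T) (x0 x y : T) : connect e x y ->
  exists q : seq T, [/\ uniq q, 0 < size q, nth x0 q 0 = y /\
    nth x0 q (size q).-1 = x,
    (forall i, i.+1 < size q -> e (nth x0 q i.+1) (nth x0 q i)) &
    (forall z, z \in q -> connect e x z)].
Proof.
move=> /connectP [s hp ->]; case: (shortenP hp) => s' hp' hu _.
exists (rev (x :: s')); split.
- by rewrite rev_uniq.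
- by rewrite size_rev.
- split. rewrite nth_rev //= subSS subn0.
  by rewrite -[nth _ _ _]/(nth x0 (x :: s') (size (x :: s')).-1) nth_last.
  rewrite size_rev nth_rev /= ?subnn //; lia.
- move=> i; rewrite size_rev /= => hi.
  rewrite !nth_rev /= ?size_rev //; try lia.
  have ar1 : forall n, i.+1 < n.+1 -> n.+1 - i.+1 = (n - i.+1).+1 by move=> n; lia.
  have ar2 : forall n, n.+1 - i.+2 = n - i.+1 by move=> n; lia.
  have ar3 : forall n, i.+1 < n.+1 -> n - i.+1 < n by move=> n; lia.
  rewrite ar2 ar1 //.
  move/pathP: hp' => /(_ x0 (size s' - i.+1) (ar3 _ hi)).
  by rewrite -[nth x0 s' _]/(nth x0 (x :: s') (size s' - i.+1).+1).
- by move=> z; rewrite mem_rev; apply: path_connect.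
Qed.

Ltac clean_arith := repeat match goal with
 | H : ?P |- _ => lazymatch type of P with Prop => lazymatch P with
     | is_true (leq _ _) => fail | @eq nat _ _ => fail | _ => clear H end end end.
Ltac unify_sizes := repeat match goal with
 | H : context [@size ?T1 ?s] |- context [@size ?T2 ?s] =>
     assert_fails (constr_eq T1 T2); change (@size T2 s) with (@size T1 s)
 | H : context [@size ?T1 ?s], H' : context [@size ?T2 ?s] |- _ =>
     assert_fails (constr_eq T1 T2); change (@size T2 s) with (@size T1 s) in H'
 end.
Ltac nlia := clean_arith; unify_sizes; lia.

Lemma mono d (edge : rel (node d)) (S S' : {set 'I_d}) :
  is_dag edge -> exogenous_E edge -> S \subset S' ->
  (forall j, j \in S' -> connect edge (nX j) nY) ->
  dsep edge [set nY] [set nE] [set nX j | j in S] ->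
  dsep edge [set nY] [set nE] [set nX j | j in S'].
Proof.
move=> hdag hex hSS hanc hS p [hs hu hadj] hh hl hdc.
have hh' : nth nE p 0 = nY by rewrite nth0; move: hh; rewrite inE => /eqP.
have hl' : last nE p = nE by move: hl; rewrite inE => /eqP.
set Z := [set nX j | j in S]; set Z' := [set nX j | j in S'].
have hZ : Z \subset Z' by apply: imsetS.
pose bad i := [&& 0 < i, i.+1 < size p, collider edge p i &
                 ~~ [exists z in Z, connect edge (nth nE p i) z]].
have [hb|hnb] := boolP [exists i : 'I_(size p), bad i]; last first.
  apply: (hS p (And3 hs hu hadj) hh hl) => i hi0 hi.
  have [hc hnc] := hdc i hi0 hi; split.
    move=> hcol; move/existsPn: hnb => /(_ (Ordinal (ltnW hi))).
    rewrite /bad /= hi0 hi hcol /= negbK => /exists_inP [z hz hcz].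
    by exists z.
  by move=> /hnc; apply: contra; apply: (subsetP hZ).
have exb : exists i, bad i by case/existsP: hb => i hi; exists (val i).
have ubb : forall i, bad i -> i <= size p by move=> i /and4P [_ h _ _]; nlia.
case: (ex_maxnP exb ubb) => m hbm hmax.
have badE : forall i, bad i = [&& 0 < i, i.+1 < size p, collider edge p i &
                 ~~ [exists z in Z, connect edge (nth nE p i) z]] by [].
clearbody bad; clear hb exb ubb.
move: hbm; rewrite badE => /and4P [hm0 hm hcm hnz].
set c := nth nE p m.
have [z hz hcz] := (hdc m hm0 hm).1 hcm.
have hcY : connect edge c nY.
  by move: hz hcz => /imsetP [j hj ->] hcz; exact: connect_trans hcz (hanc j hj).
have [q [hqu hq0 [hqY hqc] hqe hqd]] := dirpath nE hcY.
have hcZ : forall v, v \in q -> v \notin Z.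
  move=> v /hqd hv; apply/negP => hvZ; move/negP: hnz; apply.
  by apply/exists_inP; exists v.
pose P := fun v => v \in drop m p.
have hcq : c \in q by rewrite -hqc mem_nth // prednK.
have hcP : P c.
  have <- : nth nE (drop m p) 0 = c by rewrite nth_drop addn0.
  by rewrite /P mem_nth // size_drop subn_gt0 ltnW.
have hasP : has P q by apply/hasP; exists c.
set f := find P q.
have hfq : f < size q by rewrite -has_find.
set x := nth nE q f.
have hxP : P x by apply: nth_find.
set k := index x (drop m p).
set m' := m + k.
have hk : k < size p - m by rewrite -size_drop index_mem.
have hxm : nth nE p m' = x by rewrite -nth_drop nth_index.
have hm'p : m' < size p by rewrite /m'; nlia.
have hf0 : 0 < f.
  rewrite lt0n; apply/negP => /eqP hf.
  move: hxm; rewrite /x hf hqY -hh' => /eqP; rewrite nth_uniq //; last nlia.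
  by rewrite /m'; nlia.
set r := take f q ++ drop m' p.
have hsr : size r = f + (size p - m') by rewrite size_cat (size_takel (ltnW hfq)) size_drop.
have R1 : forall t, t <= f -> nth nE r t = nth nE q t.
  move=> t ht; rewrite nth_cat (size_takel (ltnW hfq)).
  case: ltnP => ht2; first by rewrite nth_take.
  have -> : t = f by nlia.
  by rewrite subnn nth_drop addn0 hxm.
have R2 : forall t, f <= t -> nth nE r t = nth nE p (m' + (t - f)).
  move=> t ht; rewrite nth_cat (size_takel (ltnW hfq)).
  by rewrite ltnNge ht /= nth_drop.
have hr : is_path edge r.
  split.
  - by rewrite hsr; nlia.
  - rewrite cat_uniq take_uniq // drop_uniq // andbT /=.
    apply/hasPn => v hv; apply/negP => /nthP => /(_ nE) [t].
    rewrite (size_takel (ltnW hfq)) => ht; rewrite nth_take // => hv'.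
    have := before_find nE ht; rewrite -/f hv' /P => /negP; apply.
    by move: hv; rewrite /m' addnC -drop_drop; apply: mem_drop.
  - move=> i hi; rewrite /adj.
    have [hif|hif] := ltnP i f.
      rewrite !R1 // ?(hqe i) ?orbT //; nlia.
    rewrite !R2 //; last nlia.
    have -> : m' + (i.+1 - f) = (m' + (i - f)).+1 by nlia.
    by apply: hadj; rewrite hsr in hi; nlia.
have hrh : head nE r \in [set nY] by rewrite -nth0 R1 // hqY inE.
have hrl : last nE r \in [set nE].
  rewrite -nth_last R2; last by rewrite hsr; nlia.
  have -> : m' + ((size r).-1 - f) = (size p).-1 by rewrite hsr; nlia.
  by rewrite nth_last hl' inE.
apply: (hS r hr hrh hrl) => i hi0 hi.
have [hif|hif] := leqP i f.
  have hcol : ~~ collider edge r i.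
    rewrite /collider (R1 i) // (R1 i.-1); last nlia.
    apply/negP => /andP [h1 _].
    have := hqe i.-1; rewrite prednK // => /(_ ltac:(nlia)) h2.
    exact: dag2 hdag h1 h2.
  split; first by rewrite (negbTE hcol).
  by move=> _; rewrite R1 //; apply: hcZ; rewrite mem_nth //; nlia.
set s := m' + (i - f).
have hcolE : collider edge r i = collider edge p s.
  rewrite /collider R2; last nlia.
  rewrite R2; last nlia. rewrite R2; last nlia.
  have -> : m' + (i.-1 - f) = s.-1 by rewrite /s; nlia.
  by have -> : m' + (i.+1 - f) = s.+1 by rewrite /s; nlia.
have hs0 : 0 < s by rewrite /s; nlia.
have hs1 : s.+1 < size p by rewrite hsr in hi; rewrite /s; nlia.
have [hc hnc] := hdc s hs0 hs1.
rewrite hcolE R2; last nlia.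
split.
  move=> hcol; have : ~~ bad s.
    by apply/negP => /hmax; rewrite /s; nlia.
  rewrite badE hs0 hs1 hcol /= negbK => /exists_inP [w hw hcw].
  by exists w.
by move=> /hnc; apply: contra; apply: (subsetP hZ).
Qed.

Theorem proposition3 (d : nat) (edge : rel (node d))
  (CI : {set node d} -> {set node d} -> {set node d} -> bool) :
  is_dag edge ->
  markov edge CI ->
  faithful edge CI ->
  exogenous_E edge ->
  ~~ edge nE nY ->
  is_invariant CI (S_IAS CI) /\
  ((S_ICP CI) \subset (S_IAS CI) /\
   (S_ICP CI = S_IAS CI :> {set 'I_d} <-> is_invariant CI (S_ICP CI))).
Proof.
move=> hdag hmk hfa hex hEY.
have inv : forall S, is_invariant CI S <->
    dsep edge [set nY] [set nE] [set nX j | j in S].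
  move=> S.
  have hpd : pairwise_disjoint [set nY] [set nE] [set nX j | j in S].
    split; rewrite disjoint_subset; apply/subsetP => v; rewrite !inE.
    - by move=> /eqP ->.
    - by move=> /eqP -> /=; apply/imsetP => [[j _]].
    - by move=> /eqP -> /=; apply/imsetP => [[j _]].
  by split; [apply: hfa | apply: hmk].
have hPa := pa_inv hdag hex hEY.
have hminanc : forall S, min_invariant CI S -> S \subset anc edge.
  move=> S /andP [hi /forallP hm].
  have hT : is_invariant CI (S :&: anc edge)
    by apply/inv; apply: restrict_anc => //; apply/inv.
  case: (boolP (S :&: anc edge \proper S)) => hp.
    by move: (hm (S :&: anc edge)) => /implyP /(_ hp); rewrite hT.
  move: hp; rewrite properE subsetIl /= negbK => hsub.
  exact: subset_trans hsub (subsetIr _ _).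
have [S0 hS0] : exists S0, min_invariant CI S0.
  have [|S0 /minsetP [hi hmin]] := @ex_minset _ (fun S => is_invariant CI S).
    by exists [set j | edge (nX j) nY]; apply/inv.
  exists S0; apply/andP; split => //; apply/forallP => S'; apply/implyP => hp.
  apply/negP => hi'; have := hmin S' hi' (proper_sub hp) => hE.
  by move: hp; rewrite hE properxx.
have hIAS_anc : S_IAS CI \subset anc edge by apply/bigcupsP.
have hS0sub : S0 \subset S_IAS CI by apply: bigcup_sup.
have hi : is_invariant CI (S_IAS CI).
  apply/inv; apply: (mono hdag hex hS0sub).
    by move=> j /(subsetP hIAS_anc); rewrite inE.
  by apply/inv; case/andP: hS0.
split => //.
have hICP : S_ICP CI = \bigcap_(S | is_invariant CI S) S.
  rewrite /S_ICP; case: ifP => // /existsP []; exists S0; by case/andP: hS0.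
have hsub : S_ICP CI \subset S_IAS CI.
  rewrite hICP; apply: subset_trans hS0sub; apply: bigcap_inf; by case/andP: hS0.
split => //; split; first by move=> ->.
move=> hI; apply/eqP; rewrite eqEsubset hsub /=.
apply/bigcupsP => S /andP [hS /forallP hm].
have sub : S_ICP CI \subset S by rewrite hICP; apply: bigcap_inf.
case: (boolP (S_ICP CI \proper S)) => hp.
  by move: (hm (S_ICP CI)) => /implyP /(_ hp); rewrite hI.
by move: hp; rewrite properE sub /= negbK.
Qed.
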